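(* Fix angles $\alpha_1,\alpha_2,\alpha_3\in(0,\pi/2)$ with $\alpha_1+\alpha_2+\alpha_3=\pi$. Let $H$ and $H'$ be two right-angled hexagons in the hyperbolic plane, each with a choice of long and short edges, whose tripods have the same angles $2\alpha_1,2\alpha_2,2\alpha_3$ at the center and common edge lengths $d$ and $d'$ respectively. Let $2\ell_i$ and $2\ell_i'$ denote the lengths of the long edge $s_i$ of $H$ and of $H'$ respectively. Then for all $i,j\in\{1,2,3\}$, \[ \frac{\cosh\ell_i'}{\cosh\ell_j'}=\frac{\cosh\ell_i}{\cosh\ell_j}. \] That is, with the angles $\alpha_i$ fixed, the ratios among $\cosh\ell_1,\cosh\ell_2,\cosh\ell_3$ do not depend on $d$.
   Context: A right-angled hexagon $H$ comes with a choice of three pairwise non-consecutive edges $s_1,s_2,s_3$ (long edges); the other three edges $t_1,t_2,t_3$ are the short edges, $t_i$ opposite to $s_i$. Let $\tilde l_i$ be the complete geodesic containing $t_i$, $O$ the unique point equidistant from $\tilde l_1,\tilde l_2,\tilde l_3$, and $A_i$ the foot of the perpendicular from $O$ to $\tilde l_i$. The tripod of $H$ is $OA_1\cup OA_2\cup OA_3$; its three edges have a common length $d$. For $\{i,j,m\}=\{1,2,3\}$ the angle at $O$ between $OA_j$ and $OA_m$ (on the side of $s_i$) is denoted $2\alpha_i$. Here one considers hexagons with $O$ in the interior of $H$, so that $\alpha_i<\pi/2$ and $\alpha_1+\alpha_2+\alpha_3=\pi$. *)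

(* Defs.v *)
(* concrete reals R. Hyperbolic plane = hyperboloid model in
   Minkowski space R^{2,1}. *)
From Stdlib Require Import Reals Lra.
Open Scope R_scope.

Record vec3 := V3 { c0 : R; c1 : R; c2 : R }.

Definition mink (x y : vec3) : R := - c0 x * c0 y + c1 x * c1 y + c2 x * c2 y.

Definition inH (x : vec3) : Prop := mink x x = -1 /\ 0 < c0 x.

Definition arcosh (t : R) : R := ln (t + sqrt (t * t - 1)).

Definition hdist (x y : vec3) : R := arcosh (- mink x y).

(* Tangent vector at p of the geodesic from p towards q
   (projection of q onto the tangent space T_p = p^perp). *)
Definition tang (p q : vec3) : vec3 :=
  V3 (c0 q + mink p q * c0 p) (c1 q + mink p q * c1 p) (c2 q + mink p q * c2 p).

Definition hangle (p q r : vec3) : R :=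
  acos (mink (tang p q) (tang p r) /
        (sqrt (mink (tang p q) (tang p q)) * sqrt (mink (tang p r) (tang p r)))).

(* Euclidean determinant of three vectors of R^3: for x,y distinct points of H,
   the sign of det3 x y z says on which side of the geodesic through x and y
   the point z lies (0 = on the geodesic). *)
Definition det3 (x y z : vec3) : R :=
  c0 x * (c1 y * c2 z - c2 y * c1 z)
  - c1 x * (c0 y * c2 z - c2 y * c0 z)
  + c2 x * (c0 y * c1 z - c1 y * c0 z).

Definition on_line (x y z : vec3) : Prop := inH z /\ det3 x y z = 0.

(* A hexagon is given by its cyclically ordered vertices v_0,...,v_5
   (index taken mod 6); its edges are e_k = [v_k, v_{k+1}]. *)
Definition hexagon := nat -> vec3.
Definition vtx (h : hexagon) (k : nat) : vec3 := h (k mod 6).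

Definition right_angled_hexagon (h : hexagon) : Prop :=
  (forall k, inH (vtx h k)) /\
  (exists s : R, (s = 1 \/ s = -1) /\
     forall k j, (k < 6)%nat -> (j < 6)%nat -> j <> k -> j <> ((k + 1) mod 6)%nat ->
       0 < s * det3 (vtx h k) (vtx h (k + 1)) (vtx h j)) /\
  (forall k, hangle (vtx h (k + 1)) (vtx h k) (vtx h (k + 2)) = PI / 2).

Definition interior_pt (h : hexagon) (O : vec3) : Prop :=
  inH O /\
  exists s : R, (s = 1 \/ s = -1) /\
    forall k j, (k < 6)%nat -> (j < 6)%nat -> j <> k -> j <> ((k + 1) mod 6)%nat ->
      0 < s * det3 (vtx h k) (vtx h (k + 1)) (vtx h j) /\
      0 < s * det3 (vtx h k) (vtx h (k + 1)) O.

(* Labeling convention (indices i = 0,1,2 stand for 1,2,3 of the paper):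
   long edge  s_i = e_{2i}   = [v_{2i}, v_{2i+1}],
   short edge t_i = e_{2i+3} = [v_{2i+3}, v_{2i+4}]  (opposite to s_i). *)
Definition short_line (h : hexagon) (i : nat) (z : vec3) : Prop :=
  on_line (vtx h (2 * i + 3)) (vtx h (2 * i + 4)) z.

(* The tripod of h: O in the interior of h, A_i the foot of the
   perpendicular from O to the complete geodesic tilde-l_i containing t_i,
   all at the common distance d from O; the angle at O between O A_j and
   O A_m ({i,j,m} = {0,1,2}, i.e. on the side of s_i) equals 2 alpha_i. *)
Definition is_tripod (h : hexagon) (O : vec3) (A : nat -> vec3) (d : R)
    (alpha : nat -> R) : Prop :=
  interior_pt h O /\
  (forall i, (i < 3)%nat ->
     short_line h i (A i) /\
     (forall y, short_line h i y -> y <> A i -> hangle (A i) O y = PI / 2) /\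
     hdist O (A i) = d) /\
  (forall i, (i < 3)%nat ->
     hangle O (A ((i + 1) mod 3)%nat) (A ((i + 2) mod 3)%nat) = 2 * alpha i).

(* Main.v *)
Require Import Defs.
From Stdlib Require Import Reals Lra Psatz Classical.
Open Scope R_scope.

Lemma mink_sym x y : mink x y = mink y x.
Proof. destruct x as [a0 a1 a2], y as [b0 b1 b2]; unfold mink; simpl; ring. Qed.

Lemma mink_tang2 p q p' q' : mink (tang p q) (tang p' q') =
  mink q q' + mink p' q' * mink q p' + mink p q * mink p q' + mink p q * mink p' q' * mink p p'.
Proof. destruct p as [a0 a1 a2], q as [b0 b1 b2], p' as [d0 d1 d2], q' as [e0 e1 e2]; unfold tang, mink; simpl; ring. Qed.

Lemma mink_tang1 p q y : mink (tang p q) y = mink q y + mink p q * mink p y.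
Proof. destruct p as [a0 a1 a2], q as [b0 b1 b2], y as [d0 d1 d2]; unfold tang, mink; simpl; ring. Qed.

Lemma rev_cs x y : inH x -> inH y -> 1 <= - mink x y.
Proof.
  destruct x as [x0 x1 x2], y as [y0 y1 y2]; unfold inH, mink; simpl.
  intros [H1 P1] [H2 P2].
  assert (Q: (x0*y0)^2 = (1 + x1^2+x2^2)*(1+y1^2+y2^2)) by nra.
  assert (D: (1 + (x1*y1+x2*y2))^2 <= (x0*y0)^2).
  { rewrite Q. pose proof (pow2_ge_0 (x1-y1)). pose proof (pow2_ge_0 (x2-y2)).
    pose proof (pow2_ge_0 (x1*y2-x2*y1)). nra. }
  assert (0 < x0*y0) by nra.
  destruct (Rle_dec (1 + (x1*y1+x2*y2)) 0); [nra|].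
  nra.
Qed.

Lemma rev_cs_strict x y : inH x -> inH y -> x <> y -> 1 < - mink x y.
Proof.
  destruct x as [x0 x1 x2], y as [y0 y1 y2]; unfold inH, mink; simpl.
  intros [H1 P1] [H2 P2] Hne.
  assert (Q: (x0*y0)^2 = (1 + x1^2+x2^2)*(1+y1^2+y2^2)) by nra.
  destruct (Req_dec x1 y1) as [e1|e1]; [destruct (Req_dec x2 y2) as [e2|e2]|].
  - subst. exfalso. apply Hne. assert (x0 = y0) by nra. subst; reflexivity.
  - assert (D: (1 + (x1*y1+x2*y2))^2 < (x0*y0)^2).
    { rewrite Q. assert (0 < (x2-y2)^2) by (assert (HH: 0 < Rsqr (x2-y2)) by (apply Rsqr_pos_lt; lra); unfold Rsqr in HH; nra). pose proof (pow2_ge_0 (x1-y1)). pose proof (pow2_ge_0 (x1*y2-x2*y1)). nra. }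
    assert (0 < x0*y0) by nra. destruct (Rle_dec (1 + (x1*y1+x2*y2)) 0); nra.
  - assert (D: (1 + (x1*y1+x2*y2))^2 < (x0*y0)^2).
    { rewrite Q. assert (0 < (x1-y1)^2) by (assert (HH: 0 < Rsqr (x1-y1)) by (apply Rsqr_pos_lt; lra); unfold Rsqr in HH; nra). pose proof (pow2_ge_0 (x2-y2)). pose proof (pow2_ge_0 (x1*y2-x2*y1)). nra. }
    assert (0 < x0*y0) by nra. destruct (Rle_dec (1 + (x1*y1+x2*y2)) 0); nra.
Qed.

Lemma cosh_arcosh t : 1 <= t -> cosh (arcosh t) = t.
Proof.
  intros Ht. unfold cosh, arcosh.
  assert (Hs0: 0 <= t*t-1) by nra.
  pose proof (sqrt_pos (t*t-1)) as Hs.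
  pose proof (sqrt_sqrt _ Hs0) as Hss.
  set (s := sqrt (t*t-1)) in *.
  assert (Hp: 0 < t + s) by lra.
  rewrite exp_Ropp, exp_ln by exact Hp.
  field_simplify; [|lra]. apply (Rmult_eq_reg_r (2*t+2*s)); [|lra]. unfold Rdiv. rewrite Rmult_assoc, Rinv_l by lra. nra.
Qed.

Lemma cosh_double x : cosh (2*x) = 2 * cosh x ^ 2 - 1.
Proof.
  unfold cosh.
  replace (2*x) with (x+x) by ring. replace (-(x+x)) with ((-x)+(-x)) by ring.
  rewrite !exp_plus.
  assert (E: exp x * exp (-x) = 1) by (rewrite <- exp_plus, Rplus_opp_r, exp_0; reflexivity).
  nra.
Qed.

Lemma acos_val x th : acos x = th -> 0 < th < PI -> x = cos th.
Proof.
  intros H Hb.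
  assert (B: -1 <= x <= 1).
  { unfold acos in H. destruct (Rle_dec x (-1)); [lra|]. destruct (Rle_dec 1 x); lra. }
  rewrite <- H, cos_acos; auto.
Qed.

Lemma par a b p q z X Y : mink a p = 0 -> mink a q = 0 -> mink b p = 0 -> mink b q = 0 ->
  det3 p q z <> 0 -> mink a X * mink b Y = mink a Y * mink b X.
Proof.
  destruct a as [a0 a1 a2], b as [b0 b1 b2], p as [p0 p1 p2], q as [q0 q1 q2],
    z as [z0 z1 z2], X as [X0 X1 X2], Y as [Y0 Y1 Y2]; unfold mink, det3; simpl.
  intros Ha1 Ha2 Hb1 Hb2 Hd.
  set (n0 := p1*q2 - p2*q1). set (n1 := p2*q0 - p0*q2). set (n2 := p0*q1 - p1*q0).
  set (nn := n0*n0+n1*n1+n2*n2).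
  assert (Hnn: nn <> 0).
  { intro E. apply Hd. unfold nn in E.
    assert (e0: n0 = 0) by nra. assert (e1: n1 = 0) by nra. assert (e2: n2 = 0) by nra.
    match goal with |- ?L = 0 => replace L with (z0*n0+z1*n1+z2*n2) by (unfold n0,n1,n2; ring) end.
    rewrite e0, e1, e2; ring. }
  assert (EA: forall W0 W1 W2 k0 k1 k2, -k0*p0+k1*p1+k2*p2 = 0 -> -k0*q0+k1*q1+k2*q2 = 0 ->
     (-k0*W0+k1*W1+k2*W2)*nn = (-k0*n0+k1*n1+k2*n2)*(W0*n0+W1*n1+W2*n2)).
  { intros W0 W1 W2 k0 k1 k2 E1 E2.
    set (al := -k0*p0+k1*p1+k2*p2) in *. set (be := -k0*q0+k1*q1+k2*q2) in *.
    assert (Id: (-k0*W0+k1*W1+k2*W2)*nn - (-k0*n0+k1*n1+k2*n2)*(W0*n0+W1*n1+W2*n2)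
      = be * (W0*(n1*p2-n2*p1) + W1*(n2*p0-n0*p2) + W2*(n0*p1-n1*p0))
        - al * (W0*(n1*q2-n2*q1) + W1*(n2*q0-n0*q2) + W2*(n0*q1-n1*q0))).
    { unfold al, be, nn, n0, n1, n2. ring. }
    rewrite E1, E2 in Id. lra. }
  pose proof (EA X0 X1 X2 a0 a1 a2 Ha1 Ha2) as E1.
  pose proof (EA Y0 Y1 Y2 b0 b1 b2 Hb1 Hb2) as E2.
  pose proof (EA Y0 Y1 Y2 a0 a1 a2 Ha1 Ha2) as E3.
  pose proof (EA X0 X1 X2 b0 b1 b2 Hb1 Hb2) as E4.
  apply (Rmult_eq_reg_r (nn*nn)); [|intro; apply Hnn; nra].
  transitivity (((-a0*X0+a1*X1+a2*X2)*nn) * ((-b0*Y0+b1*Y1+b2*Y2)*nn)); [ring|].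
  rewrite E1, E2.
  transitivity (((-a0*Y0+a1*Y1+a2*Y2)*nn) * ((-b0*X0+b1*X1+b2*X2)*nn)); [|ring].
  rewrite E3, E4. ring.
Qed.

Lemma tang_norm p q : inH p -> inH q -> mink (tang p q) (tang p q) = (mink p q)^2 - 1.
Proof.
  intros [Hp _] [Hq _]. rewrite mink_tang2, Hp, Hq, (mink_sym q p). ring.
Qed.

Lemma tang_norm_pos p q : inH p -> inH q -> q <> p -> 0 < mink (tang p q) (tang p q).
Proof.
  intros Hp Hq Hne. rewrite tang_norm by auto.
  pose proof (rev_cs_strict p q Hp Hq (fun e => Hne (eq_sym e))). nra.
Qed.

Lemma hangle_right p q r : inH p -> inH q -> inH r -> q <> p -> r <> p ->
  hangle p q r = PI/2 -> mink (tang p q) (tang p r) = 0.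
Proof.
  intros Hp Hq Hr Hq' Hr' H. unfold hangle in H.
  apply acos_val in H; [|pose proof PI_RGT_0; lra].
  rewrite cos_PI2 in H.
  pose proof (tang_norm_pos p q Hp Hq Hq') as A1.
  pose proof (tang_norm_pos p r Hp Hr Hr') as A2.
  pose proof (sqrt_lt_R0 _ A1). pose proof (sqrt_lt_R0 _ A2).
  set (N := mink (tang p q) (tang p r)) in *.
  set (s1 := sqrt _) in H. set (s2 := sqrt _) in H.
  assert (0 < s1 * s2) by (apply Rmult_lt_0_compat; assumption).
  unfold Rdiv in H. apply Rmult_integral in H. destruct H as [H|H]; auto.
  exfalso. apply (Rinv_neq_0_compat (s1*s2)); [lra|exact H].
Qed.

Lemma side O Aa Ab v w u u' z1 z2 d al l :
  inH O -> inH Aa -> inH Ab -> inH v -> inH w ->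
  O <> Aa -> O <> Ab -> v <> w ->
  hdist O Aa = d -> hdist O Ab = d ->
  mink (tang Aa O) v = 0 -> mink (tang Aa O) u = 0 ->
  mink (tang Ab O) w = 0 -> mink (tang Ab O) u' = 0 ->
  mink (tang v w) u = 0 -> mink (tang w v) u' = 0 ->
  det3 u v z1 <> 0 -> det3 w u' z2 <> 0 ->
  hangle O Aa Ab = 2*al -> 0 < al < PI/2 ->
  hdist v w = 2*l ->
  cosh l = cosh d * sin al.
Proof.
  intros HO HA HB Hv Hw nOA nOB nvw dA dB pa1 pa2 pb1 pb2 pt1 pt2 det1 det2 ang Hal Hl.
  pose proof PI_RGT_0 as Hpi.
  assert (KA: cosh d = - mink O Aa).
  { rewrite <- dA. unfold hdist. apply cosh_arcosh, rev_cs; auto. }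
  assert (KB: cosh d = - mink O Ab).
  { rewrite <- dB. unfold hdist. apply cosh_arcosh, rev_cs; auto. }
  pose proof (rev_cs_strict O Aa HO HA nOA) as K1.
  set (K := cosh d) in *.
  assert (KA': mink O Aa = -K) by lra. assert (KB': mink O Ab = -K) by lra.
  assert (HK: 1 < K) by lra. assert (HS: 0 < K^2-1) by nra. assert (HS2: 0 < (K^2-1)^2) by (apply pow_lt; lra).
  assert (Cc: cosh (2*l) = - mink v w).
  { rewrite <- Hl. unfold hdist. apply cosh_arcosh, rev_cs; auto. }
  pose proof (rev_cs_strict v w Hv Hw nvw) as C1.
  rewrite cosh_double in Cc.
  destruct HO as [HOO HO0], HA as [HAA HA0], HB as [HBB HB0], Hv as [Hvv Hv0], Hw as [Hww Hw0].
  assert (Tv: mink (tang v w) v = 0).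
  { rewrite mink_tang1, Hvv, (mink_sym w v). ring. }
  assert (Tw: mink (tang w v) w = 0).
  { rewrite mink_tang1, Hww, (mink_sym w v).  ring. }
  assert (P1: forall X Y, mink (tang v w) X * mink (tang Aa O) Y = mink (tang v w) Y * mink (tang Aa O) X).
  { intros X Y. apply (par _ _ u v z1); auto. }
  assert (P2: forall X Y, mink (tang w v) X * mink (tang Ab O) Y = mink (tang w v) Y * mink (tang Ab O) X).
  { intros X Y. apply (par _ _ w u' z2); auto. }
  set (T := tang v w) in *. set (T' := tang w v) in *.
  set (wa := tang Aa O) in *. set (wb := tang Ab O) in *.
  assert (Core: mink T T' ^2 * mink wa wa * mink wb wb = mink wa wb ^2 * mink T T * mink T' T').
  { pose proof (P1 T' wa). pose proof (P1 T wb). pose proof (P2 T wb). pose proof (P2 T' wa).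
    replace (mink T T' ^2 * mink wa wa * mink wb wb) with ((mink T T' * mink wa wa) * (mink T' T * mink wb wb)) by (rewrite (mink_sym T' T); ring).
    rewrite H, H1.
    replace (mink wa wb ^2 * mink T T * mink T' T') with ((mink T T * mink wa wb) * (mink T' T' * mink wb wa)) by (rewrite (mink_sym wb wa); ring).
    rewrite H0, H2. rewrite (mink_sym wa T'), (mink_sym wb T), (mink_sym wa T), (mink_sym wb T'). ring. }
  assert (ETT: mink T T = (mink v w)^2 - 1).
  { unfold T. rewrite mink_tang2, Hww, Hvv, (mink_sym w v).  ring. }
  assert (ETT': mink T' T' = (mink v w)^2 - 1).
  { unfold T'. rewrite mink_tang2, Hww, Hvv, (mink_sym w v).  ring. }
  assert (ETT2: mink T T' = (mink v w)^3 - mink v w).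
  { unfold T, T'. rewrite mink_tang2, Hww, Hvv, (mink_sym w v).  ring. }
  assert (Ewa: mink wa wa = K^2 - 1).
  { unfold wa. rewrite mink_tang2, HOO, HAA, (mink_sym Aa O), KA'. ring. }
  assert (Ewb: mink wb wb = K^2 - 1).
  { unfold wb. rewrite mink_tang2, HOO, HBB, (mink_sym Ab O), KB'. ring. }
  set (P := mink Aa Ab).
  assert (Ewab: mink wa wb = -1 + 2*K^2 + K^2 * P).
  { unfold wa, wb. rewrite mink_tang2, HOO, (mink_sym Aa O), (mink_sym Ab O), KA', KB'.
    fold P. ring. }
  assert (Hang: (P + K^2) / (K^2 - 1) = cos (2*al)).
  { unfold hangle in ang. apply acos_val in ang; [|lra].
    rewrite <- ang.
    rewrite !mink_tang2, HOO, HAA, HBB, KA', KB', (mink_sym Aa O), (mink_sym Ab O), KA', KB'.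
    fold P. rewrite sqrt_sqrt by nra. f_equal; ring. }
  rewrite cos_2a_sin in Hang.
  set (sn := sin al) in *.
  assert (Hsn: 0 < sn) by (apply sin_gt_0; lra).
  assert (HP: P = (K^2-1)*(1 - 2*sn*sn) - K^2).
  { rewrite <- Hang. field. nra. }
  rewrite ETT, ETT', ETT2, Ewa, Ewb, Ewab in Core.
  assert (Hc2: (mink v w)^2 * (K^2-1)^2 = (-1 + 2*K^2 + K^2*P)^2).
  { assert (0 < ((mink v w)^2-1)^2) by (assert (0 < (mink v w)^2 - 1) by nra; nra).
    apply (Rmult_eq_reg_r (((mink v w)^2-1)^2)); [|lra].
    replace (((mink v w)^3-mink v w)^2) with ((mink v w)^2*((mink v w)^2-1)^2) in Core by ring. nra. }
  set (M := K^2*(1 - 2*sn*sn) - (K^2-1)).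
  assert (EM: -1 + 2*K^2 + K^2*P = M * (K^2-1)).
  { rewrite HP. unfold M. ring. }
  rewrite EM in Hc2.
  assert (Hc3: (mink v w)^2 = M^2).
  { apply (Rmult_eq_reg_r ((K^2-1)^2)); [|lra]. rewrite Hc2. ring. }
  assert (HM: M < 1).
  { unfold M. assert (0 < K^2 * (2*sn*sn)) by (apply Rmult_lt_0_compat; nra). nra. }
  assert (Hc: mink v w = M) by nra.
  assert (Hch: cosh l ^2 = (K * sn)^2).
  { assert (2 * cosh l ^ 2 = 1 - mink v w) by lra. rewrite Hc in H. unfold M in H. nra. }
  assert (0 < cosh l).
  { unfold cosh. pose proof (exp_pos l). pose proof (exp_pos (-l)). lra. }
  assert (0 < K * sn) by (apply Rmult_lt_0_compat; lra).
  nra.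
Qed.

Lemma tang_tang p q r : inH p -> mink (tang p q) (tang p r) = mink (tang p q) r.
Proof. intros [Hp _]. rewrite mink_tang2, mink_tang1, Hp, (mink_sym q p). ring. Qed.

Lemma foot P Q O A y : inH O -> O <> A -> on_line P Q A ->
  (forall y, on_line P Q y -> y <> A -> hangle A O y = PI/2) -> on_line P Q y ->
  mink (tang A O) y = 0.
Proof.
  intros HO nOA HA Hp Hy.
  destruct (classic (y = A)) as [e|ne].
  - subst. destruct HA as [[HAA _] _]. rewrite mink_tang1, HAA, (mink_sym A O). ring.
  - rewrite <- tang_tang by (apply HA).
    apply hangle_right; auto. apply HA. apply Hy.
Qed.

Lemma det3_same1 p z : det3 p p z = 0.
Proof. destruct p as [a0 a1 a2], z as [b0 b1 b2]; unfold det3; simpl; ring. Qed.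
Lemma det3_same2 p q : det3 p q q = 0.
Proof. destruct p as [a0 a1 a2], q as [b0 b1 b2]; unfold det3; simpl; ring. Qed.
Lemma det3_same3 p q : det3 p q p = 0.
Proof. destruct p as [a0 a1 a2], q as [b0 b1 b2]; unfold det3; simpl; ring. Qed.

Lemma right_perp p q r : inH p -> mink (tang p q) (tang p r) = 0 -> mink (tang p r) q = 0.
Proof.
  intros Hp E. rewrite tang_tang in E by auto. rewrite mink_tang1 in *.
  rewrite (mink_sym r q). lra.
Qed.

Lemma det3_ne p q z : det3 p q z <> 0 -> p <> q /\ z <> p /\ z <> q.
Proof.
  intros D. repeat split; intro E; subst; apply D;
  first [apply det3_same1 | apply det3_same2 | apply det3_same3].
Qed.

Lemma hex_side (H : hexagon) O A d alpha l :
  (forall i, (i < 3)%nat -> 0 < alpha i < PI / 2) ->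
  right_angled_hexagon H -> is_tripod H O A d alpha ->
  (forall i, (i < 3)%nat -> hdist (vtx H (2 * i)) (vtx H (2 * i + 1)) = 2 * l i) ->
  forall i, (i < 3)%nat -> cosh (l i) = cosh d * sin (alpha i).
Proof.
  intros Hal [Hin [[s [Hs Hconv]] Hrt]] [[HOin [s' [Hs' Hint]]] [Hfeet Hang]] Hlen i Hi.
  unfold vtx in *.
  destruct i as [|[|[|i]]]; [ | | | lia].
  - pose proof (Hin (0%nat)) as Iv; pose proof (Hin (1%nat)) as Iw;
    pose proof (Hin (5%nat)) as Iu; pose proof (Hin (2%nat)) as Iu2.
    pose proof (Hfeet (1%nat) ltac:(lia)) as Fa; pose proof (Hfeet (2%nat) ltac:(lia)) as Fb.
    unfold short_line, vtx in Fa, Fb; simpl in Fa, Fb, Iv, Iw, Iu, Iu2.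
    destruct Fa as [LA [PA DA]]; destruct Fb as [LB [PB DB]].
    assert (nOA : O <> A (1%nat)).
    { intro E. destruct (Hint (5%nat) (1%nat) ltac:(lia) ltac:(lia) ltac:(lia) ltac:(simpl; lia)) as [_ X].
      simpl in X. rewrite E in X. destruct LA as [_ LA']. rewrite LA' in X. lra. }
    assert (nOB : O <> A (2%nat)).
    { intro E. destruct (Hint (1%nat) (3%nat) ltac:(lia) ltac:(lia) ltac:(lia) ltac:(simpl; lia)) as [_ X].
      simpl in X. rewrite E in X. destruct LB as [_ LB']. rewrite LB' in X. lra. }
    assert (nvw : H (0%nat) <> H (1%nat)).
    { intro E. pose proof (Hconv (0%nat) (2%nat) ltac:(lia) ltac:(lia) ltac:(lia) ltac:(simpl; lia)) as X.
      simpl in X. rewrite E, det3_same1 in X. lra. }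
    assert (det1 : det3 (H (5%nat)) (H (0%nat)) (H (1%nat)) <> 0).
    { pose proof (Hconv (5%nat) (1%nat) ltac:(lia) ltac:(lia) ltac:(lia) ltac:(simpl; lia)) as X.
      simpl in X. intro E. rewrite E in X. lra. }
    assert (det2 : det3 (H (1%nat)) (H (2%nat)) (H (0%nat)) <> 0).
    { pose proof (Hconv (1%nat) (0%nat) ltac:(lia) ltac:(lia) ltac:(lia) ltac:(simpl; lia)) as X.
      simpl in X. intro E. rewrite E in X. lra. }
    destruct (det3_ne _ _ _ det1) as [n1 [n2 n3]]; destruct (det3_ne _ _ _ det2) as [n4 [n5 n6]].
    pose proof (Hrt (5%nat)) as R1; pose proof (Hrt (0%nat)) as R2; simpl in R1, R2.
    apply hangle_right in R1; auto.
    apply hangle_right in R2; auto.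
    apply right_perp in R1; auto. rewrite tang_tang in R2 by auto.
    pose proof (proj1 LA) as IAa; pose proof (proj1 LB) as IBb.
    pose proof (Hlen (0%nat) ltac:(lia)) as Hl. unfold vtx in Hl. simpl in Hl.
    pose proof (Hang (0%nat) ltac:(lia)) as Ha. simpl in Ha.
    apply (side O (A (1%nat)) (A (2%nat)) (H (0%nat)) (H (1%nat)) (H (5%nat)) (H (2%nat)) (H (1%nat)) (H (0%nat)) d (alpha (0%nat)) (l (0%nat))); auto.
    all: try (apply Hal; lia).
    all: eapply foot; eauto; split; auto; first [apply det3_same2 | apply det3_same3].
  - pose proof (Hin (2%nat)) as Iv; pose proof (Hin (3%nat)) as Iw;
    pose proof (Hin (1%nat)) as Iu; pose proof (Hin (4%nat)) as Iu2.
    pose proof (Hfeet (2%nat) ltac:(lia)) as Fa; pose proof (Hfeet (0%nat) ltac:(lia)) as Fb.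
    unfold short_line, vtx in Fa, Fb; simpl in Fa, Fb, Iv, Iw, Iu, Iu2.
    destruct Fa as [LA [PA DA]]; destruct Fb as [LB [PB DB]].
    assert (nOA : O <> A (2%nat)).
    { intro E. destruct (Hint (1%nat) (3%nat) ltac:(lia) ltac:(lia) ltac:(lia) ltac:(simpl; lia)) as [_ X].
      simpl in X. rewrite E in X. destruct LA as [_ LA']. rewrite LA' in X. lra. }
    assert (nOB : O <> A (0%nat)).
    { intro E. destruct (Hint (3%nat) (5%nat) ltac:(lia) ltac:(lia) ltac:(lia) ltac:(simpl; lia)) as [_ X].
      simpl in X. rewrite E in X. destruct LB as [_ LB']. rewrite LB' in X. lra. }
    assert (nvw : H (2%nat) <> H (3%nat)).
    { intro E. pose proof (Hconv (2%nat) (4%nat) ltac:(lia) ltac:(lia) ltac:(lia) ltac:(simpl; lia)) as X.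
      simpl in X. rewrite E, det3_same1 in X. lra. }
    assert (det1 : det3 (H (1%nat)) (H (2%nat)) (H (3%nat)) <> 0).
    { pose proof (Hconv (1%nat) (3%nat) ltac:(lia) ltac:(lia) ltac:(lia) ltac:(simpl; lia)) as X.
      simpl in X. intro E. rewrite E in X. lra. }
    assert (det2 : det3 (H (3%nat)) (H (4%nat)) (H (2%nat)) <> 0).
    { pose proof (Hconv (3%nat) (2%nat) ltac:(lia) ltac:(lia) ltac:(lia) ltac:(simpl; lia)) as X.
      simpl in X. intro E. rewrite E in X. lra. }
    destruct (det3_ne _ _ _ det1) as [n1 [n2 n3]]; destruct (det3_ne _ _ _ det2) as [n4 [n5 n6]].
    pose proof (Hrt (1%nat)) as R1; pose proof (Hrt (2%nat)) as R2; simpl in R1, R2.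
    apply hangle_right in R1; auto.
    apply hangle_right in R2; auto.
    apply right_perp in R1; auto. rewrite tang_tang in R2 by auto.
    pose proof (proj1 LA) as IAa; pose proof (proj1 LB) as IBb.
    pose proof (Hlen (1%nat) ltac:(lia)) as Hl. unfold vtx in Hl. simpl in Hl.
    pose proof (Hang (1%nat) ltac:(lia)) as Ha. simpl in Ha.
    apply (side O (A (2%nat)) (A (0%nat)) (H (2%nat)) (H (3%nat)) (H (1%nat)) (H (4%nat)) (H (3%nat)) (H (2%nat)) d (alpha (1%nat)) (l (1%nat))); auto.
    all: try (apply Hal; lia).
    all: eapply foot; eauto; split; auto; first [apply det3_same2 | apply det3_same3].
  - pose proof (Hin (4%nat)) as Iv; pose proof (Hin (5%nat)) as Iw;
    pose proof (Hin (3%nat)) as Iu; pose proof (Hin (0%nat)) as Iu2.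
    pose proof (Hfeet (0%nat) ltac:(lia)) as Fa; pose proof (Hfeet (1%nat) ltac:(lia)) as Fb.
    unfold short_line, vtx in Fa, Fb; simpl in Fa, Fb, Iv, Iw, Iu, Iu2.
    destruct Fa as [LA [PA DA]]; destruct Fb as [LB [PB DB]].
    assert (nOA : O <> A (0%nat)).
    { intro E. destruct (Hint (3%nat) (5%nat) ltac:(lia) ltac:(lia) ltac:(lia) ltac:(simpl; lia)) as [_ X].
      simpl in X. rewrite E in X. destruct LA as [_ LA']. rewrite LA' in X. lra. }
    assert (nOB : O <> A (1%nat)).
    { intro E. destruct (Hint (5%nat) (1%nat) ltac:(lia) ltac:(lia) ltac:(lia) ltac:(simpl; lia)) as [_ X].
      simpl in X. rewrite E in X. destruct LB as [_ LB']. rewrite LB' in X. lra. }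
    assert (nvw : H (4%nat) <> H (5%nat)).
    { intro E. pose proof (Hconv (4%nat) (0%nat) ltac:(lia) ltac:(lia) ltac:(lia) ltac:(simpl; lia)) as X.
      simpl in X. rewrite E, det3_same1 in X. lra. }
    assert (det1 : det3 (H (3%nat)) (H (4%nat)) (H (5%nat)) <> 0).
    { pose proof (Hconv (3%nat) (5%nat) ltac:(lia) ltac:(lia) ltac:(lia) ltac:(simpl; lia)) as X.
      simpl in X. intro E. rewrite E in X. lra. }
    assert (det2 : det3 (H (5%nat)) (H (0%nat)) (H (4%nat)) <> 0).
    { pose proof (Hconv (5%nat) (4%nat) ltac:(lia) ltac:(lia) ltac:(lia) ltac:(simpl; lia)) as X.
      simpl in X. intro E. rewrite E in X. lra. }
    destruct (det3_ne _ _ _ det1) as [n1 [n2 n3]]; destruct (det3_ne _ _ _ det2) as [n4 [n5 n6]].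
    pose proof (Hrt (3%nat)) as R1; pose proof (Hrt (4%nat)) as R2; simpl in R1, R2.
    apply hangle_right in R1; auto.
    apply hangle_right in R2; auto.
    apply right_perp in R1; auto. rewrite tang_tang in R2 by auto.
    pose proof (proj1 LA) as IAa; pose proof (proj1 LB) as IBb.
    pose proof (Hlen (2%nat) ltac:(lia)) as Hl. unfold vtx in Hl. simpl in Hl.
    pose proof (Hang (2%nat) ltac:(lia)) as Ha. simpl in Ha.
    apply (side O (A (0%nat)) (A (1%nat)) (H (4%nat)) (H (5%nat)) (H (3%nat)) (H (0%nat)) (H (5%nat)) (H (4%nat)) d (alpha (2%nat)) (l (2%nat))); auto.
    all: try (apply Hal; lia).
    all: eapply foot; eauto; split; auto; first [apply det3_same2 | apply det3_same3].
Qed.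

Theorem mainTheorem3 (alpha : nat -> R)
  (H H' : hexagon) (O O' : vec3) (A A' : nat -> vec3) (d d' : R)
  (l l' : nat -> R) :
  (forall i, (i < 3)%nat -> 0 < alpha i < PI / 2) ->
  alpha 0%nat + alpha 1%nat + alpha 2%nat = PI ->
  right_angled_hexagon H -> right_angled_hexagon H' ->
  is_tripod H O A d alpha -> is_tripod H' O' A' d' alpha ->
  (forall i, (i < 3)%nat -> hdist (vtx H (2 * i)) (vtx H (2 * i + 1)) = 2 * l i) ->
  (forall i, (i < 3)%nat -> hdist (vtx H' (2 * i)) (vtx H' (2 * i + 1)) = 2 * l' i) ->
  forall i j, (i < 3)%nat -> (j < 3)%nat ->
    cosh (l' i) / cosh (l' j) = cosh (l i) / cosh (l j).
Proof.
  intros Hal _ HH HH' HT HT' Hl Hl' i j Hi Hj.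
  rewrite (hex_side H O A d alpha l Hal HH HT Hl i Hi), (hex_side H O A d alpha l Hal HH HT Hl j Hj),
    (hex_side H' O' A' d' alpha l' Hal HH' HT' Hl' i Hi), (hex_side H' O' A' d' alpha l' Hal HH' HT' Hl' j Hj).
  assert (0 < cosh d) by (unfold cosh; pose proof (exp_pos d); pose proof (exp_pos (-d)); lra).
  assert (0 < cosh d') by (unfold cosh; pose proof (exp_pos d'); pose proof (exp_pos (-d')); lra).
  assert (0 < sin (alpha j)) by (pose proof (Hal j Hj); apply sin_gt_0; pose proof PI_RGT_0; lra).
  field. split; lra.
Qed.
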